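(* In the setting of the context, fix two distinct exposures $d_k\neq d_l$. Let $\widehat{\tau_{HT}}(d_k,d_l)=\frac1N\big[\widehat{y^T_{HT}}(d_k)-\widehat{y^T_{HT}}(d_l)\big]$ and define $$\widehat{\mathrm{Var}}[\widehat{\tau_{HT}}(d_k,d_l)]=\frac{1}{N^2}\Big\{\widehat{\mathrm{Var}}[\widehat{y^T_{HT}}(d_k)]+\widehat{A_2}(d_k)+\widehat{\mathrm{Var}}[\widehat{y^T_{HT}}(d_l)]+\widehat{A_2}(d_l)-2\,\widehat{\mathrm{Cov}}_A[\widehat{y^T_{HT}}(d_k),\widehat{y^T_{HT}}(d_l)]\Big\},$$ with the component estimators defined in the context. Then $$\mathrm{E}\big[\widehat{\mathrm{Var}}[\widehat{\tau_{HT}}(d_k,d_l)]\big]\ \ge\ \mathrm{Var}\big[\widehat{\tau_{HT}}(d_k,d_l)\big].$$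
   Context: A finite population $U$ of units $i=1,\dots,N$. A random treatment assignment vector $\mathbf{Z}$ takes values in $\Omega=\{\mathbf{z}\in\{1,\dots,M\}^N:p_{\mathbf{z}}>0\}$ with known probabilities $p_{\mathbf{z}}$. An exposure mapping $f:\Omega\times\Theta\to\Delta=\{d_1,\dots,d_K\}$ with unit traits $\theta_i$ gives exposures $D_i=f(\mathbf{Z},\theta_i)$. Write $\pi_i(d)=\Pr(D_i=d)$, $\pi_{ij}(d,d')=\Pr(D_i=d,D_j=d')$, $\pi_{ij}(d)=\pi_{ij}(d,d)$ (so $\pi_{ii}(d)=\pi_i(d)$ and $\pi_{ii}(d,d')=0$ for $d\ne d'$); assume $0<\pi_i(d_k)<1$ for all $i,k$. Potential outcomes $y_i(d)$ are fixed reals; the observed outcome is $y_i(D_i)$. Convention: $0/0=0$. Definitions: $\widehat{y^T_{HT}}(d)=\sum_i \mathbf{I}(D_i=d)y_i(d)/\pi_i(d)$; $\widehat{\mathrm{Var}}[\widehat{y^T_{HT}}(d)]=\sum_{i\in U}\mathbf{I}(D_i=d)[1-\pi_i(d)]\big[y_i(d)/\pi_i(d)\big]^2+\sum_{i\in U}\sum_{j\in U\setminus\{i\}}\mathbf{I}(D_i=d)\mathbf{I}(D_j=d)\frac{\pi_{ij}(d)-\pi_i(d)\pi_j(d)}{\pi_{ij}(d)}\frac{y_i(d)}{\pi_i(d)}\frac{y_j(d)}{\pi_j(d)}$; $\widehat{A_2}(d)=\sum_{i\in U}\sum_{j\in U\setminus\{i\}:\ \pi_{ij}(d)=0}\Big[\frac{\mathbf{I}(D_i=d)y_i(d)^2}{2\pi_i(d)}+\frac{\mathbf{I}(D_j=d)y_j(d)^2}{2\pi_j(d)}\Big]$;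 $\widehat{\mathrm{Cov}}_A[\widehat{y^T_{HT}}(d_k),\widehat{y^T_{HT}}(d_l)]=\sum_{i\in U}\sum_{j\in U\setminus\{i\}:\pi_{ij}(d_k,d_l)>0}\frac{\mathbf{I}(D_i=d_k)\mathbf{I}(D_j=d_l)}{\pi_{ij}(d_k,d_l)}\frac{y_i(d_k)}{\pi_i(d_k)}\frac{y_j(d_l)}{\pi_j(d_l)}[\pi_{ij}(d_k,d_l)-\pi_i(d_k)\pi_j(d_l)]-\sum_{i\in U}\sum_{j\in U:\pi_{ij}(d_k,d_l)=0}\Big[\frac{\mathbf{I}(D_i=d_k)y_i(d_k)^2}{2\pi_i(d_k)}+\frac{\mathbf{I}(D_j=d_l)y_j(d_l)^2}{2\pi_j(d_l)}\Big]$. Expectations and variances are over the randomization distribution of $\mathbf{Z}$. *)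

(* Defs.v *)
From mathcomp Require Import all_boot all_order all_algebra.
Set Implicit Arguments. Unset Strict Implicit. Unset Printing Implicit Defensive.
Import Order.TTheory GRing.Theory Num.Theory.
Local Open Scope ring_scope.

Section Design.
Variables (R : realFieldType) (Om : finType) (N : nat) (Delta : finType).
(* p : randomization probabilities of assignment vectors (p z >= 0, summing to 1) *)
Variable p : Om -> R.
(* D z i : exposure of unit i under assignment z *)
Variable D : Om -> 'I_N -> Delta.
(* y i d : potential outcome of unit i under exposure d *)
Variable y : 'I_N -> Delta -> R.

Definition expect (X : Om -> R) : R := \sum_(z : Om) p z * X z.
Definition variance (X : Om -> R) : R := expect (fun z => (X z - expect X) ^+ 2).

Definition ind (b : bool) : R := if b then 1 else 0.

Definition pi1 (i : 'I_N) (d : Delta) : R := expect (fun z => ind (D z i == d)).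
Definition pi2 (i j : 'I_N) (d d' : Delta) : R :=
  expect (fun z => ind ((D z i == d) && (D z j == d'))).

Definition yHT (d : Delta) (z : Om) : R :=
  \sum_(i < N) ind (D z i == d) * y i d / pi1 i d.

Definition VarHat (d : Delta) (z : Om) : R :=
  \sum_(i < N) ind (D z i == d) * (1 - pi1 i d) * (y i d / pi1 i d) ^+ 2
  + \sum_(i < N) \sum_(j < N | j != i)
      ind (D z i == d) * ind (D z j == d)
      * ((pi2 i j d d - pi1 i d * pi1 j d) / pi2 i j d d)
      * (y i d / pi1 i d) * (y j d / pi1 j d).

Definition A2Hat (d : Delta) (z : Om) : R :=
  \sum_(i < N) \sum_(j < N | (j != i) && (pi2 i j d d == 0))
    (ind (D z i == d) * y i d ^+ 2 / (2 * pi1 i d)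
     + ind (D z j == d) * y j d ^+ 2 / (2 * pi1 j d)).

Definition CovAHat (dk dl : Delta) (z : Om) : R :=
  \sum_(i < N) \sum_(j < N | (j != i) && (0 < pi2 i j dk dl))
    (ind (D z i == dk) * ind (D z j == dl) / pi2 i j dk dl
     * (y i dk / pi1 i dk) * (y j dl / pi1 j dl)
     * (pi2 i j dk dl - pi1 i dk * pi1 j dl))
  - \sum_(i < N) \sum_(j < N | pi2 i j dk dl == 0)
    (ind (D z i == dk) * y i dk ^+ 2 / (2 * pi1 i dk)
     + ind (D z j == dl) * y j dl ^+ 2 / (2 * pi1 j dl)).

Definition tauHT (dk dl : Delta) (z : Om) : R :=
  (N%:R)^-1 * (yHT dk z - yHT dl z).

Definition VarTauHat (dk dl : Delta) (z : Om) : R :=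
  (N%:R ^+ 2)^-1 * (VarHat dk z + A2Hat dk z + VarHat dl z + A2Hat dl z
                     - 2 * CovAHat dk dl z).
End Design.

(* Main.v *)
Require Import Defs.
From mathcomp Require Import all_boot all_order all_algebra.
From mathcomp Require Import ring lra.
Import Order.TTheory GRing.Theory Num.Theory.
Local Open Scope ring_scope.
Set Implicit Arguments. Unset Strict Implicit.

Lemma expect_ext (R : realFieldType) (Om : finType) (p : Om -> R) (X Y0 : Om -> R) :
  (forall z, X z = Y0 z) -> expect p X = expect p Y0.
Proof. by move=> h; apply: eq_bigr => z _; rewrite h. Qed.
Arguments expect_ext {R Om p X} Y0 _.

Lemma expectD (R : realFieldType) (Om : finType) (p : Om -> R) (X Y : Om -> R) :
  expect p (fun z => X z + Y z) = expect p X + expect p Y.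
Proof. by rewrite /expect -big_split; apply: eq_bigr => z _; rewrite mulrDr. Qed.

Lemma expectB (R : realFieldType) (Om : finType) (p : Om -> R) (X Y : Om -> R) :
  expect p (fun z => X z - Y z) = expect p X - expect p Y.
Proof. by rewrite /expect -sumrB; apply: eq_bigr => z _; rewrite mulrBr. Qed.

Lemma expectZr (R : realFieldType) (Om : finType) (p : Om -> R) (X : Om -> R) c :
  expect p (fun z => X z * c) = expect p X * c.
Proof. by rewrite /expect mulr_suml; apply: eq_bigr => z _; rewrite mulrA. Qed.

Lemma expectZl (R : realFieldType) (Om : finType) (p : Om -> R) (X : Om -> R) c :
  expect p (fun z => c * X z) = c * expect p X.
Proof. by rewrite /expect mulr_sumr; apply: eq_bigr => z _; rewrite mulrCA. Qed.

Lemma expect0 (R : realFieldType) (Om : finType) (p : Om -> R) :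
  expect p (fun _ => 0) = 0.
Proof. by rewrite /expect big1 // => z _; rewrite mulr0. Qed.

Lemma expect_sum (R : realFieldType) (Om : finType) (p : Om -> R) (I : Type)
  (r : seq I) (P : pred I) (F : I -> Om -> R) :
  expect p (fun z => \sum_(i <- r | P i) F i z) = \sum_(i <- r | P i) expect p (F i).
Proof.
rewrite /expect; under eq_bigr do rewrite mulr_sumr.
exact: exchange_big.
Qed.

Lemma ind_and (R : realFieldType) (a b : bool) : ind R a * ind R b = ind R (a && b).
Proof. by case: a; case: b; rewrite /ind ?mulr1 ?mulr0 ?mul0r. Qed.

Lemma expect_ind2 (R : realFieldType) (Om : finType) (p : Om -> R) (a b : Om -> bool) :
  expect p (fun z => ind R (a z) * ind R (b z)) = expect p (fun z => ind R (a z && b z)).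
Proof. by apply: expect_ext => z; rewrite ind_and. Qed.

Definition cov (R : realFieldType) (Om : finType) (p : Om -> R) (X Y : Om -> R) :=
  expect p (fun z => X z * Y z) - expect p X * expect p Y.

Lemma variance_cov (R : realFieldType) (Om : finType) (p : Om -> R) (X : Om -> R) :
  \sum_z p z = 1 -> variance p X = cov p X X.
Proof.
move=> h1; rewrite /variance /cov.
set e := expect p X.
rewrite (expect_ext (fun z => X z * X z - (2 * e) * X z + e ^+ 2 * 1)); last first.
  by move=> z; ring.
rewrite expectD expectB expectZl expectZl.
have -> : expect p (fun _ => 1) = 1.
  by rewrite /expect -[RHS]h1; apply: eq_bigr => z _; rewrite mulr1.
rewrite -/e; ring.
Qed.

Lemma var_diff (R : realFieldType) (Om : finType) (p : Om -> R) (X Y : Om -> R) c :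
  \sum_z p z = 1 ->
  variance p (fun z => c * (X z - Y z)) = c ^+ 2 * (cov p X X + cov p Y Y - 2 * cov p X Y).
Proof.
move=> h1; rewrite variance_cov // /cov.
rewrite (expect_ext (fun z => c ^+ 2 * (X z * X z) + c ^+ 2 * (Y z * Y z)
   - (2 * c ^+ 2) * (X z * Y z))); last by move=> z; ring.
rewrite expectB expectD !expectZl expectB.
ring.
Qed.

Lemma pi1E (R : realFieldType) (Om : finType) (N : nat) (Delta : finType) (p : Om -> R)
  (D : Om -> 'I_N -> Delta) i d :
  expect p (fun z => ind R (D z i == d)) = pi1 p D i d.
Proof. by []. Qed.

Lemma pi2E (R : realFieldType) (Om : finType) (N : nat) (Delta : finType) (p : Om -> R)
  (D : Om -> 'I_N -> Delta) i j d d' :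
  expect p (fun z => ind R (D z i == d) * ind R (D z j == d')) = pi2 p D i j d d'.
Proof. by rewrite expect_ind2. Qed.

Lemma cov_yHT (R : realFieldType) (Om : finType) (N : nat) (Delta : finType) (p : Om -> R)
  (D : Om -> 'I_N -> Delta) (y : 'I_N -> Delta -> R) d d' :
  cov p (yHT p D y d) (yHT p D y d') =
  \sum_i \sum_j (pi2 p D i j d d' - pi1 p D i d * pi1 p D j d')
                 * (y i d / pi1 p D i d) * (y j d' / pi1 p D j d').
Proof.
rewrite /cov.
rewrite (expect_ext (fun z => \sum_i \sum_j
   ind R (D z i == d) * ind R (D z j == d') * ((y i d / pi1 p D i d) * (y j d' / pi1 p D j d')))); last first.
  move=> z; rewrite /yHT mulr_suml; apply: eq_bigr => i _.
  rewrite mulr_sumr; apply: eq_bigr => j _; ring.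
rewrite expect_sum; under eq_bigr do rewrite expect_sum.
under eq_bigr do under eq_bigr do rewrite expectZr pi2E.
rewrite /yHT.
rewrite (expect_sum p (index_enum _) xpredT (fun i z => ind R (D z i == d) * y i d / pi1 p D i d)).
rewrite (expect_sum p (index_enum _) xpredT (fun i z => ind R (D z i == d') * y i d' / pi1 p D i d')).
rewrite mulr_suml -sumrB; apply: eq_bigr => i _.
rewrite mulr_sumr -sumrB; apply: eq_bigr => j _.
rewrite !expectZr !pi1E; ring.
Qed.

Ltac fs := field; repeat (apply/andP; split); rewrite ?pnatr_eq0 ?oner_eq0 //.

Lemma var_bound (R : realFieldType) (Om : finType) (N : nat) (Delta : finType) (p : Om -> R)
  (D : Om -> 'I_N -> Delta) (y : 'I_N -> Delta -> R) d :
  (forall i, pi1 p D i d != 0) ->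
  cov p (yHT p D y d) (yHT p D y d) <= expect p (VarHat p D y d) + expect p (A2Hat p D y d).
Proof.
move=> hpi.
pose H i j z :=
  if j == i then ind R (D z i == d) * (1 - pi1 p D i d) * (y i d / pi1 p D i d) ^+ 2
  else ind R (D z i == d) * ind R (D z j == d)
      * ((pi2 p D i j d d - pi1 p D i d * pi1 p D j d) / pi2 p D i j d d)
      * (y i d / pi1 p D i d) * (y j d / pi1 p D j d)
     + (if pi2 p D i j d d == 0 then
         ind R (D z i == d) * y i d ^+ 2 / (2 * pi1 p D i d)
         + ind R (D z j == d) * y j d ^+ 2 / (2 * pi1 p D j d) else 0).
rewrite -expectD (expect_ext (fun z => \sum_i \sum_j H i j z)); last first.
  move=> z; rewrite /VarHat /A2Hat -addrA -!big_split /=.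
  apply: eq_bigr => i _; rewrite [RHS](bigD1 i) //= /H eqxx; congr (_ + _).
  rewrite big_mkcondr /= -big_split /=; apply: eq_bigr => j nji.
  by rewrite (negbTE nji).
rewrite cov_yHT expect_sum; apply: ler_sum => i _.
rewrite expect_sum; apply: ler_sum => j _.
rewrite /H; case: eqP => [->|nji].
  rewrite !expectZr pi1E.
  have -> : pi2 p D i i d d = pi1 p D i d.
    by rewrite /pi2 /pi1; apply: expect_ext => z; rewrite andbb.
  by rewrite le_eqVlt; apply/orP; left; apply/eqP; ring.
rewrite expectD !expectZr pi2E.
set q := pi2 p D i j d d.
have [h0|hn] := eqVneq q 0.
  rewrite h0 expectD !expectZr !pi1E.
  set u := y i d; set v := y j d.
  have hi := hpi i; have hj := hpi j.
  set a := pi1 p D i d in hi *; set b := pi1 p D j d in hj *.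
  have -> : (0 - a * b) * (u / a) * (v / b) = - (u * v) by fs.
  rewrite !mul0r add0r.
  have -> : a * u ^+ 2 / (2 * a) + b * v ^+ 2 / (2 * b) = (u ^+ 2 + v ^+ 2) / 2 by fs.
  have := sqr_ge0 (u + v); lra.
rewrite expect0 addr0 le_eqVlt; apply/orP; left; apply/eqP; fs.
Qed.

Lemma cov_bound (R : realFieldType) (Om : finType) (N : nat) (Delta : finType) (p : Om -> R)
  (D : Om -> 'I_N -> Delta) (y : 'I_N -> Delta -> R) dk dl :
  (forall z, 0 <= p z) -> dk != dl ->
  (forall i d, pi1 p D i d != 0) ->
  expect p (CovAHat p D y dk dl) <= cov p (yHT p D y dk) (yHT p D y dl).
Proof.
move=> hp hkl hpi.
pose K i j z :=
  (if (j != i) && (0 < pi2 p D i j dk dl) then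
    ind R (D z i == dk) * ind R (D z j == dl) / pi2 p D i j dk dl
     * (y i dk / pi1 p D i dk) * (y j dl / pi1 p D j dl)
     * (pi2 p D i j dk dl - pi1 p D i dk * pi1 p D j dl) else 0)
  - (if pi2 p D i j dk dl == 0 then
    ind R (D z i == dk) * y i dk ^+ 2 / (2 * pi1 p D i dk)
     + ind R (D z j == dl) * y j dl ^+ 2 / (2 * pi1 p D j dl) else 0).
rewrite (expect_ext (fun z => \sum_i \sum_j K i j z)); last first.
  move=> z; rewrite /CovAHat -sumrB; apply: eq_bigr => i _.
  by rewrite [X in X - _]big_mkcond [X in _ - X]big_mkcond -sumrB.
rewrite cov_yHT expect_sum; apply: ler_sum => i _.
rewrite expect_sum; apply: ler_sum => j _.
have q0 : 0 <= pi2 p D i j dk dl.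
  by apply: sumr_ge0 => z _; apply: mulr_ge0 => //; rewrite /ind; case: ifP.
rewrite /K.
set q := pi2 p D i j dk dl in q0 *.
have hi := hpi i dk; have hj := hpi j dl.
set a := pi1 p D i dk in hi *; set b := pi1 p D j dl in hj *.
set u := y i dk; set v := y j dl.
have [h0|hn] := eqVneq q 0.
  rewrite h0 ltxx andbF expectB expect0 expectD !expectZr !pi1E -/a -/b.
  have -> : (0 - a * b) * (u / a) * (v / b) = - (u * v) by fs.
  have -> : a * u ^+ 2 / (2 * a) + b * v ^+ 2 / (2 * b) = (u ^+ 2 + v ^+ 2) / 2 by fs.
  have := sqr_ge0 (u - v); lra.
have qp : 0 < q by rewrite lt_def hn.
have nji : j != i.
  apply/negP => /eqP eji; move: hn; rewrite /q eji /pi2.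
  rewrite (expect_ext (fun _ => 0)) ?expect0 ?eqxx // => z.
  by case: eqP => // ->; rewrite (negbTE hkl).
rewrite qp nji expectB expect0 !expectZr pi2E -/q subr0.
rewrite le_eqVlt; apply/orP; left; apply/eqP; fs.
Qed.

Lemma main_gen (R : realFieldType) (Om : finType) (N : nat) (Delta : finType) (p : Om -> R)
  (D : Om -> 'I_N -> Delta) (y : 'I_N -> Delta -> R) dk dl :
  (forall z, 0 <= p z) -> \sum_z p z = 1 ->
  (forall i d, 0 < pi1 p D i d < 1) -> dk != dl ->
  variance p (tauHT p D y dk dl) <= expect p (VarTauHat p D y dk dl).
Proof.
move=> hp h1 hpi hkl.
have hpi' : forall i d, pi1 p D i d != 0.
  by move=> i d; have /andP[h _] := hpi i d; rewrite gt_eqF.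
rewrite /tauHT /VarTauHat var_diff // expectZl.
set V1 := VarHat p D y dk; set V2 := VarHat p D y dl.
set A1 := A2Hat p D y dk; set A2 := A2Hat p D y dl; set C := CovAHat p D y dk dl.
rewrite expectB (@expectD _ _ p (fun z => V1 z + A1 z + V2 z) A2).
rewrite (@expectD _ _ p (fun z => V1 z + A1 z) V2) (@expectD _ _ p V1 A1) expectZl exprVn.
apply: ler_wpM2l; first by rewrite invr_ge0 exprn_ge0 // ler0n.
have := @var_bound _ _ _ _ p D y dk (hpi' ^~ dk).
have := @var_bound _ _ _ _ p D y dl (hpi' ^~ dl).
have := @cov_bound _ _ _ _ p D y dk dl hp hkl hpi'.
lra.
Qed.

Theorem mainTheorem3 (R : realFieldType) (N M : nat) (Delta : finType)
  (p : {ffun 'I_N -> 'I_M} -> R)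
  (Theta : Type) (f : {ffun 'I_N -> 'I_M} -> Theta -> Delta) (theta : 'I_N -> Theta)
  (y : 'I_N -> Delta -> R) (dk dl : Delta) :
  (forall z, 0 <= p z) -> \sum_z p z = 1 ->
  (forall i d, 0 < pi1 p (fun z i => f z (theta i)) i d < 1) ->
  dk != dl ->
  variance p (tauHT p (fun z i => f z (theta i)) y dk dl)
  <= expect p (VarTauHat p (fun z i => f z (theta i)) y dk dl).
Proof.
move=> hp h1 hpi hkl.
exact: (@main_gen R _ N Delta p (fun z i => f z (theta i)) y dk dl hp h1 hpi hkl).
Qed.
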